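(* Let $\Gamma$ be a $\mathbb Z^d$-periodic graph and $H=\Delta+Q$ with real $\mathbb Z^d$-periodic $Q$ (notation as in the context). Let $\psi\in\ell^2(V_* )$ be an eigenvector with positive components of $H(0)$ corresponding to its smallest eigenvalue $\lambda_1(0)$. Then: (i) for every $f\in\ell^2(V_* )$ and every $\vartheta\in\mathbb T^d$, $$\big\langle (H(\vartheta)-\lambda_1(0)\mathbb 1)\Psi f,\Psi f\big\rangle_{V_*}=\frac12\sum_{\mathbf e=(v,u)\in\mathcal A_*}c_{uv}\,\big|f(v)-e^{i\langle\tau(\mathbf e),\vartheta\rangle}f(u)\big|^2,\qquad c_{uv}=\frac{\psi(u)\psi(v)}{\sqrt{\varkappa_u\varkappa_v}},$$ where $\mathbb 1$ is the identity and $\Psi$ is the operator of multiplication by $\psi$; (ii) for all $\vartheta\in\mathbb T^d$, $$c_0^{-2}\lambda^{(0)}_1(\vartheta)\le\lambda_1(\vartheta)-\lambda_1(0)\le c_0^2\lambda^{(0)}_1(\vartheta),\qquad c_0=\frac{\psi_+}{\psi_-},\ \ \psi_-=\min_{v\in V_*}\frac{\psi(v)}{\sqrt{\varkappa_v}},\ \ \psi_+=\max_{v\in V_*}\frac{\psi(v)}{\sqrt{\varkappa_v}},$$ where $\lambda_1(\vartheta)$ and $\lambda^{(0)}_1(\vartheta)$ are the smallest eigenvalues of $H(\vartheta)$ and $\Delta(\vartheta)$ respectively.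
   Context: A $\mathbb Z^d$-periodic graph is a connected infinite graph $\Gamma=(V,\mathcal E)$, possibly with loops and multiple edges, on which $\mathbb Z^d$ acts freely by graph automorphisms ($v\mapsto v+m$), with finite vertex degrees and finite quotient graph $\Gamma_*=\Gamma/\mathbb Z^d=(V_*,\mathcal E_* )$. Each undirected edge is regarded as two oppositely oriented edges; $\mathcal A$ is the set of oriented edges, $\mathcal A_*=\mathcal A/\mathbb Z^d$. The degree $\varkappa_v$ is the number of oriented edges starting at $v$. $Q:V\to\mathbb R$ with $Q(v+m)=Q(v)$, viewed also as a function on $V_*$. Fix a subtree of $\Gamma$ whose vertex set $V_0$ consists of $\#V_*$ pairwise non-equivalent vertices; each $v\in V$ is uniquely $v=v_0+[v]$ with $v_0\in V_0$, $[v]\in\mathbb Z^d$; the index of $\mathbf e=(u,v)$ is $\tau(\mathbf e)=[v]-[u]$, defined on $\mathcal A_*$ by shift invariance. For $\vartheta\in\mathbb T^d=\mathbb R^d/(2\pi\mathbb Z)^d$: $(\Delta(\vartheta)f)(v)=f(v)-\sum_{\mathbf e=(v,u)\in\mathcal A_*}\frac{e^{i\langle\tau(\mathbf e),\vartheta\rangle}}{\sqrt{\varkappa_v\varkappa_u}}f(u)$ and $H(\vartheta)=\Delta(\vartheta)+Q$ on $\ell^2(V_* )$, inner product $\langle f_1,f_2\rangle_{V_*}=\sum_{v}f_1(v)\overline{f_2(v)}$. *)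

(* Defs.v *)
From HB Require Import structures.
From mathcomp Require Import all_boot all_order all_algebra.
From mathcomp Require Import complex.
From mathcomp Require Import all_classical all_reals.
From mathcomp Require Import trigo.
From Stdlib Require Import Relation_Operators.
Set Implicit Arguments. Unset Strict Implicit. Unset Printing Implicit Defensive.
Import Order.TTheory GRing.Theory Num.Theory.
Local Open Scope ring_scope.
Local Open Scope complex_scope.

(* A Z^d-periodic graph Gamma is encoded by its finite quotient Gamma_* :
   vertex set V (= V_* ), oriented-edge set E (= A_* ), source/target maps,
   the orientation reversal rev, and the edge index tau : E -> Z^d.
   Gamma itself is the graph on V * Z^d whose oriented edges are
   ((src e, m), (tgt e, m + tau e)) for e in E, m in Z^d; Z^d acts by shifts
   of the second coordinate (freely).  V * {0} is the fundamental set V_0. *)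

Section Defs.
Variables (R : realType) (d : nat) (V E : finType).
Variables (src tgt : E -> V) (rev : E -> E) (tau : E -> 'rV[int]_d).
Local Notation C := R[i].

(* structural axioms: each undirected edge = two opposite oriented edges *)
Definition quotient_graph_axioms : Prop :=
  (forall e, rev (rev e) = e) /\
  (forall e, rev e <> e) /\
  (forall e, src (rev e) = tgt e) /\
  (forall e, tgt (rev e) = src e) /\
  (forall e, tau (rev e) = - tau e).

Definition gamma_adj (x y : V * 'rV[int]_d) : Prop :=
  exists e, src e = x.1 /\ tgt e = y.1 /\ y.2 = x.2 + tau e.

Definition gamma_connected : Prop :=
  forall x y, clos_refl_trans _ gamma_adj x y.

Definition deg (v : V) : nat := #|[set e | src e == v]|.

Definition pairing (e : E) (theta : 'rV[R]_d) : R :=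
  \sum_(k < d) (tau e 0 k)%:~R * theta 0 k.

Definition expi (x : R) : C := (cos x) +i* (sin x).

Definition sqdeg (v : V) : R := Num.sqrt (deg v)%:R.

Definition Delta (theta : 'rV[R]_d) (f : V -> C) : V -> C := fun v =>
  f v - \sum_(e | src e == v)
          expi (pairing e theta) / ((Num.sqrt ((deg v)%:R * (deg (tgt e))%:R))%:C)
          * f (tgt e).

Definition Hop (Q : V -> R) (theta : 'rV[R]_d) (f : V -> C) : V -> C := fun v =>
  Delta theta f v + (Q v)%:C * f v.

Definition inner (f1 f2 : V -> C) : C := \sum_v f1 v * (f2 v)^*.

Definition is_eigenvector (A : (V -> C) -> (V -> C)) (mu : C) (f : V -> C) : Prop :=
  (exists v, f v != 0) /\ forall v, A f v = mu * f v.

Definition is_eigenvalue (A : (V -> C) -> (V -> C)) (mu : C) : Prop :=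
  exists f, is_eigenvector A mu f.

(* l is the smallest eigenvalue of A: it is an eigenvalue, and every
   eigenvalue mu satisfies l <= mu in the order of C (i.e. mu is real, >= l) *)
Definition is_smallest_eigenvalue (A : (V -> C) -> (V -> C)) (l : R) : Prop :=
  is_eigenvalue A l%:C /\ forall mu, is_eigenvalue A mu -> l%:C <= mu.

Definition mulop (psi : V -> R) (f : V -> C) : V -> C := fun v => (psi v)%:C * f v.

Definition cw (psi : V -> R) (e : E) : R :=
  psi (tgt e) * psi (src e) / Num.sqrt ((deg (tgt e))%:R * (deg (src e))%:R).

Definition psi_minus (psi : V -> R) : R := inf (range (fun v => psi v / sqdeg v)).
Definition psi_plus (psi : V -> R) : R := sup (range (fun v => psi v / sqdeg v)).

End Defs.

(* Main.v *)
Require Import Defs.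
From HB Require Import structures.
From mathcomp Require Import all_boot all_order all_algebra.
From mathcomp Require Import complex.
From mathcomp Require Import all_classical all_reals.
From mathcomp Require Import trigo.
From mathcomp Require Import ring.
Import Order.TTheory GRing.Theory Num.Theory.
Local Open Scope ring_scope.
Local Open Scope complex_scope.
Set Implicit Arguments. Unset Strict Implicit.

Section P.
Variables (R : realType) (d : nat) (V E : finType).
Variables (src tgt : E -> V) (rev : E -> E) (tau : E -> 'rV[int]_d).
Hypothesis Hq : quotient_graph_axioms src tgt rev tau.
Local Notation C := R[i].

Lemma normsq (z : C) : `|z|^+2 = z * z^*.
Proof. by rewrite normCK. Qed.

Lemma expi0 : expi (0 : R) = 1.
Proof. by rewrite /expi cos0 sin0. Qed.

Lemma expi_conj (x : R) : (expi x)^* = expi (- x).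
Proof. by rewrite /expi cosN sinN. Qed.

Lemma expi_mulJ (x : R) : expi x * (expi x)^* = 1.
Proof.
rewrite /expi /=; apply/eqP; rewrite eq_complex /=; apply/andP; split; apply/eqP.
  by rewrite mulrN opprK -!expr2 cos2Dsin2.
by rewrite mulrN [sin x * _]mulrC addNr.
Qed.

Lemma expi_neq0 (x : R) : expi x != 0.
Proof. by apply/eqP => h; have := expi_mulJ x; rewrite h mul0r => /eqP; rewrite eq_sym oner_eq0. Qed.

Lemma expi_conjV (x : R) : (expi x)^* = (expi x)^-1.
Proof. by apply: (mulfI (expi_neq0 x)); rewrite expi_mulJ mulfV // expi_neq0. Qed.

Lemma pairing0 e : pairing tau e (0 : 'rV[R]_d) = 0.
Proof. by rewrite /pairing big1 // => k _; rewrite mxE mulr0. Qed.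

Lemma pairing_rev e (th : 'rV[R]_d) : pairing tau (rev e) th = - pairing tau e th.
Proof.
case: Hq => _ [_ [_ [_ Ht]]].
rewrite /pairing Ht -sumrN; apply: eq_bigr => k _.
by rewrite mxE intrN mulNr.
Qed.

Lemma rev_inj : injective rev.
Proof. by case: Hq => H1 _; apply: (can_inj H1). Qed.

Lemma sum_by_src (F : E -> C) :
  \sum_v \sum_(e | src e == v) F e = \sum_e F e.
Proof. by rewrite [RHS](partition_big src predT) //. Qed.

Lemma rC_div (x y : R) : (x / y)%:C = x%:C / y%:C :> C.
Proof. by rewrite rmorphM fmorphV. Qed.
Lemma rC_mul (x y : R) : (x * y)%:C = x%:C * y%:C :> C.
Proof. by rewrite rmorphM. Qed.

Lemma cjE (x : C) : Num.conj x = conjc x.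
Proof. by []. Qed.
Lemma cjM (x y : C) : conjc (x * y) = conjc x * conjc y.
Proof. exact: rmorphM. Qed.
Lemma cjB (x y : C) : conjc (x - y) = conjc x - conjc y.
Proof. exact: rmorphB. Qed.

Lemma deg_src_gt0 e : (0 < deg src (src e))%N.
Proof. by apply/card_gt0P; exists e; rewrite inE. Qed.
Lemma deg_tgt_gt0 e : (0 < deg src (tgt e))%N.
Proof.
case: Hq => _ [_ [Hsr _]]; apply/card_gt0P; exists (rev e); by rewrite inE Hsr.
Qed.

Lemma sqC_neq0 (a b : nat) : (0 < a)%N -> (0 < b)%N ->
  (Num.sqrt (a%:R * b%:R : R))%:C != 0 :> C.
Proof.
move=> ha hb; have hs : 0 < Num.sqrt (a%:R * b%:R : R) by rewrite sqrtr_gt0 mulr_gt0 // ltr0n.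
apply/eqP => h; have h0 : Num.sqrt (a%:R * b%:R : R) = 0 by case: h.
by move: hs; rewrite h0 ltxx.
Qed.

Lemma part_i (Q psi : V -> R) (lam : R)
  (Heig : forall v, Hop src tgt tau Q 0 (fun v => (psi v)%:C) v = lam%:C * (psi v)%:C)
  (f : V -> C) (th : 'rV[R]_d) :
  inner (fun v => Hop src tgt tau Q th (mulop psi f) v - lam%:C * mulop psi f v) (mulop psi f)
  = 2^-1 * \sum_(e : E) (cw src tgt psi e)%:C *
              `| f (src e) - expi (pairing tau e th) * f (tgt e) | ^+ 2.
Proof.
pose sq v e := (Num.sqrt ((deg src v)%:R * (deg src (tgt e))%:R))%:C : C.
pose X e := expi (pairing tau e th).
have A : forall v, Hop src tgt tau Q th (mulop psi f) v - lam%:C * mulop psi f v =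
   \sum_(e | src e == v) (psi (tgt e))%:C / sq v e * (f v - X e * f (tgt e)).
  move=> v; have h := Heig v; rewrite /Hop /Delta in h.
  move: h; under eq_bigr do rewrite pairing0 expi0; move=> h.
  set S1 := \sum_(e | _) _ in h.
  have hQ : (Q v)%:C * (psi v)%:C = lam%:C * (psi v)%:C - (psi v)%:C + S1.
    by rewrite -h; ring.
  rewrite /Hop /Delta /mulop mulrA hQ.
  have -> : \sum_(e | src e == v) (psi (tgt e))%:C / sq v e * (f v - X e * f (tgt e))
     = S1 * f v - \sum_(e | src e == v) X e / sq v e * ((psi (tgt e))%:C * f (tgt e)).
    by rewrite /S1 mulr_suml -sumrB; apply: eq_bigr => e _; rewrite /X; ring.
  rewrite /X; ring.
pose F e := (psi (tgt e))%:C / sq (src e) e * (f (src e) - X e * f (tgt e))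
            * ((psi (src e))%:C * f (src e))^*.
have B : inner (fun v => Hop src tgt tau Q th (mulop psi f) v - lam%:C * mulop psi f v)
           (mulop psi f) = \sum_e F e.
  rewrite /inner -sum_by_src; apply: eq_bigr => v _.
  rewrite A mulr_suml; apply: eq_bigr => e /eqP <-.
  by rewrite /F /mulop.
rewrite B.
case: (Hq) => Hrr [_ [Hsr [Htr _]]].
have G : forall e, (cw src tgt psi e)%:C * `| f (src e) - X e * f (tgt e) | ^+ 2
                   = F e + F (rev e).
  move=> e; rewrite normsq /F /X /cw /sq Hsr Htr pairing_rev -expi_conj.
  rewrite !cjE !cjB !cjM ?conjcK !conjc_real expi_conjV.
  rewrite rC_div rC_mul [((deg src (tgt e))%:R * _)]mulrC.
  set t := (Num.sqrt _)%:C.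
  field; rewrite expi_neq0 /=; exact: sqC_neq0 (deg_src_gt0 e) (deg_tgt_gt0 e).
rewrite (eq_bigr _ (fun e _ => G e)) big_split /=.
rewrite [X in _ + X](reindex_inj rev_inj) /=.
under [X in _ + X]eq_bigr do rewrite Hrr.
rewrite -mulr2n -(mulr_natl (\sum_i F i)) mulrA mulVf ?mul1r //.
by rewrite pnatr_eq0.
Qed.

Definition Kop (a : V -> V -> C) (f : V -> C) : V -> C := fun v => \sum_w a v w * f w.

Lemma sum_enum (F : V -> C) : \sum_v F v = \sum_(i < #|V|) F (enum_val i).
Proof. by rewrite -big_enum_val. Qed.

Lemma spectral_decomp (a : V -> V -> C) (Ha : forall v w, a w v = conjc (a v w)) :
  exists (q : 'I_#|V| -> V -> C) (D : 'I_#|V| -> C),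
    [/\ forall v w, a v w = \sum_k conjc (q k v) * D k * q k w,
        forall k k', \sum_v q k v * conjc (q k' v) = (k == k')%:R &
        forall v w, \sum_k conjc (q k v) * q k w = (v == w)%:R].
Proof.
pose n := #|V|.
pose M : 'M[C]_n := \matrix_(i, j) a (enum_val i) (enum_val j).
have hMt : map_mx Num.conj M^T = M.
  by apply/matrixP => i j; rewrite !mxE Ha cjE conjcK.
have Mn : M \is normalmx by apply/normalmxP; rewrite hMt.
have hM := orthomx_spectralP Mn.
set P := spectralmx M in hM; set D := spectral_diag M in hM.
have Pu : P \is unitarymx by exact: spectral_unitarymx.
have hPP : P *m map_mx Num.conj P^T = 1%:M by apply/unitarymxP.
have hPP' : map_mx Num.conj P^T *m P = 1%:M.
  by rewrite -invmx_unitary // mulVmx // spectral_unit.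
rewrite invmx_unitary // in hM.
exists (fun k v => P k (enum_rank v)), (fun k => D 0 k); split.
- move=> v w.
  have := congr1 (fun A : 'M_n => A (enum_rank v) (enum_rank w)) hM.
  rewrite /= {1}/M mxE !enum_rankK => ->.
  rewrite mxE; apply: eq_bigr => k _.
  by rewrite mul_mx_diag !mxE.
- move=> k k'.
  have := congr1 (fun A : 'M_n => A k k') hPP.
  rewrite /= !mxE => <-.
  rewrite sum_enum; apply: eq_bigr => i _.
  by rewrite enum_valK !mxE.
- move=> v w.
  have := congr1 (fun A : 'M_n => A (enum_rank v) (enum_rank w)) hPP'.
  rewrite /= !mxE (inj_eq enum_rank_inj) => <-.
  by apply: eq_bigr => k _; rewrite !mxE.
Qed.


Lemma sum_delta (F : V -> C) v : \sum_w (v == w)%:R * F w = F v.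
Proof.
rewrite (bigD1 v) //= eqxx mul1r big1 ?addr0 // => w hw.
by rewrite eq_sym (negPf hw) mul0r.
Qed.

Lemma rayleigh (a : V -> V -> C) (Ha : forall v w, a w v = conjc (a v w)) (l : R)
  (Hl : forall mu, is_eigenvalue (Kop a) mu -> l%:C <= mu) (f : V -> C) :
  l%:C * inner f f <= inner (Kop a f) f.
Proof.
have [q [D [ha h2 h3]]] := spectral_decomp Ha.
pose z k := \sum_w q k w * f w.
have zc k : conjc (z k) = \sum_v conjc (q k v) * conjc (f v).
  by rewrite /z rmorph_sum; apply: eq_bigr => v _; exact: cjM.
have key : forall b : 'I_#|V| -> C,
    \sum_v (\sum_w (\sum_k conjc (q k v) * b k * q k w) * f w) * conjc (f v)
    = \sum_k b k * (z k * conjc (z k)).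
  move=> b.
  pose T v w k := conjc (q k v) * b k * q k w * f w * conjc (f v).
  transitivity (\sum_v \sum_w \sum_k T v w k).
    apply: eq_bigr => v _; rewrite mulr_suml; apply: eq_bigr => w _.
    rewrite !mulr_suml; apply: eq_bigr => k _; rewrite /T; ring.
  transitivity (\sum_k \sum_v \sum_w T v w k).
    rewrite [RHS]exchange_big /=; apply: eq_bigr => v _.
    exact: exchange_big.
  apply: eq_bigr => k _; rewrite zc !mulr_sumr; apply: eq_bigr => v _.
  rewrite /z mulr_suml mulr_sumr; apply: eq_bigr => w _; rewrite /T; ring.
have hK : inner (Kop a f) f = \sum_k D k * (z k * conjc (z k)).
  rewrite -key /inner /Kop; apply: eq_bigr => v _; rewrite cjE; congr (_ * _).
  by apply: eq_bigr => w _; rewrite ha.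
have hI : inner f f = \sum_k 1 * (z k * conjc (z k)).
  rewrite -key /inner; apply: eq_bigr => v _; rewrite cjE; congr (_ * _).
  rewrite -[LHS](sum_delta f v); apply: eq_bigr => w _; rewrite -h3.
  by congr (_ * _); apply: eq_bigr => k _; rewrite mulr1.
have eig : forall k, l%:C <= D k.
  move=> k; apply: Hl; exists (fun v => conjc (q k v)); split.
    case: (pselect (exists v, conjc (q k v) != 0)) => // hn; exfalso.
    have := h2 k k; rewrite eqxx big1; last first.
      move=> v _; have -> : conjc (q k v) = 0.
        by apply/eqP/negbNE/negP => hv; apply: hn; exists v.
      by rewrite mulr0.
    by move/eqP; rewrite eq_sym oner_eq0.
  move=> v; rewrite /Kop.
  transitivity (\sum_k' conjc (q k' v) * D k' * \sum_w q k' w * conjc (q k w)).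
    under eq_bigr do rewrite ha mulr_suml.
    rewrite exchange_big; apply: eq_bigr => k' _; rewrite mulr_sumr.
    by apply: eq_bigr => w _; ring.
  under eq_bigr do rewrite h2.
  rewrite (bigD1 k) //= eqxx mulr1 big1 ?addr0; first by rewrite mulrC.
  by move=> k' hk; rewrite (negPf hk) mulr0.
rewrite hK hI mulr_sumr; apply: ler_sum => k _; rewrite mul1r.
by apply: ler_wpM2r; [exact: mulcJ_ge0 | exact: eig].
Qed.


Lemma deg_pos (d0 : (0 < d)%N) (Hc : gamma_connected src tgt tau) v : (0 < deg src v)%N.
Proof.
pose m : 'rV[int]_d := const_mx 1.
have hne : ((v, 0) : V * 'rV[int]_d) != (v, m).
  apply/eqP => -[] /matrixP /(_ 0 (Ordinal d0)); rewrite !mxE => /eqP.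
  by rewrite eq_sym oner_eq0.
have step : forall x y, Relation_Operators.clos_refl_trans _ (gamma_adj src tgt tau) x y ->
    x != y -> exists z, gamma_adj src tgt tau x z.
  move=> x y; elim => [x0 y0 hxy | x0 | x0 y0 z0 h1 IH1 h2 IH2] hn.
  - by exists y0.
  - by rewrite eqxx in hn.
  - case: (eqVneq x0 y0) => [e0|ne]; last exact: IH1.
    by rewrite e0; apply: IH2; rewrite -e0.
have [z [e [he _]]] := step _ _ (Hc (v, 0) (v, m)) hne.
by apply/card_gt0P; exists e; rewrite inE he.
Qed.

Definition Kmat (th : 'rV[R]_d) (v w : V) : C :=
  \sum_(e | (src e == v) && (tgt e == w))
     expi (pairing tau e th) / (Num.sqrt ((deg src (src e))%:R * (deg src (tgt e))%:R))%:C.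

Lemma Delta_K th f v :
  Delta src tgt tau th f v = \sum_w ((v == w)%:R - Kmat th v w) * f w.
Proof.
rewrite /Delta.
under [in RHS]eq_bigr do rewrite mulrBl.
rewrite sumrB sum_delta; congr (_ - _).
rewrite (partition_big tgt predT) //=; apply: eq_bigr => w _.
rewrite /Kmat mulr_suml; apply: eq_bigr => e /andP[/eqP hs /eqP ht].
by rewrite hs ht.
Qed.

Lemma Hop_K Q th f v :
  Hop src tgt tau Q th f v
  = \sum_w ((v == w)%:R - Kmat th v w + (v == w)%:R * (Q v)%:C) * f w.
Proof.
rewrite /Hop Delta_K.
under [in RHS]eq_bigr do rewrite mulrDl.
rewrite big_split /=; congr (_ + _).
transitivity (\sum_w (v == w)%:R * ((Q v)%:C * f w)).
  by rewrite (sum_delta (fun w => (Q v)%:C * f w)).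
by apply: eq_bigr => w _; rewrite mulrA.
Qed.

Lemma cjD (x y : C) : conjc (x + y) = conjc x + conjc y.
Proof. exact: rmorphD. Qed.

Lemma cj_sum (P : pred E) (F : E -> C) :
  conjc (\sum_(e | P e) F e) = \sum_(e | P e) conjc (F e).
Proof. exact: rmorph_sum. Qed.
Lemma cjV (x : C) : conjc (x^-1) = (conjc x)^-1.
Proof. exact: conjc_inv. Qed.

Lemma Kmat_herm th v w : Kmat th w v = conjc (Kmat th v w).
Proof.
case: (Hq) => Hrr [_ [Hsr [Htr _]]].
rewrite /Kmat cj_sum (reindex_inj rev_inj).
apply: eq_big => [e|e _]; first by rewrite Hsr Htr andbC.
rewrite Hsr Htr pairing_rev -expi_conj cjM cjV conjc_real.
by rewrite [X in Num.sqrt X]mulrC.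
Qed.

Lemma aH_herm Q th v w :
  (w == v)%:R - Kmat th w v + (w == v)%:R * (Q w)%:C
  = conjc ((v == w)%:R - Kmat th v w + (v == w)%:R * (Q v)%:C).
Proof.
rewrite cjD cjB cjM -Kmat_herm conjc_nat conjc_real eq_sym.
by case: eqVneq => [->|_] //; rewrite !mul0r.
Qed.


Lemma rC0 : (0 : R)%:C = 0 :> C. Proof. by []. Qed.
Lemma rC1 : (1 : R)%:C = 1 :> C. Proof. by []. Qed.
Lemma rC_sub (x y : R) : (x - y)%:C = x%:C - y%:C :> C.
Proof. by rewrite rmorphB. Qed.
Lemma rC_inv (x : R) : (x^-1)%:C = (x%:C)^-1 :> C.
Proof. by rewrite fmorphV. Qed.

Lemma eig_ext (A B : (V -> C) -> (V -> C)) mu :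
  (forall f v, A f v = B f v) -> is_eigenvalue B mu -> is_eigenvalue A mu.
Proof. by move=> hAB [f [hf hB]]; exists f; split => // v; rewrite hAB hB. Qed.

Lemma inner_sub (A B g : V -> C) c :
  inner (fun v => A v - c * B v) g = inner A g - c * inner B g.
Proof. by rewrite /inner mulr_sumr -sumrB; apply: eq_bigr => v _; ring. Qed.

Lemma inner_eig (A h : V -> C) c : (forall v, A v = c * h v) ->
  inner A h = c * inner h h.
Proof. by move=> hA; rewrite /inner mulr_sumr; apply: eq_bigr => v _; rewrite hA mulrA. Qed.

Lemma inner_gt0 (h : V -> C) v : h v != 0 -> 0 < inner h h.
Proof.
move=> hv; rewrite /inner (bigD1 v) //=.
have h0 : 0 < h v * conjc (h v).
  by rewrite lt0r mulf_neq0 ?conjc_eq0 //= mulcJ_ge0.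
apply: (lt_le_trans h0); rewrite lerDl; apply: sumr_ge0 => w _.
exact: mulcJ_ge0.
Qed.

Lemma rayleigh_H (Q : V -> R) (th : 'rV[R]_d) (l : R) (Hs : is_smallest_eigenvalue (Hop src tgt tau Q th) l) (g : V -> C) :
  l%:C * inner g g <= inner (Hop src tgt tau Q th g) g.
Proof.
pose a v w := (v == w)%:R - Kmat th v w + (v == w)%:R * (Q v)%:C.
have := @rayleigh a (aH_herm Q th) l _ g.
have hK : forall f v, Kop a f v = Hop src tgt tau Q th f v by move=> f v; rewrite Hop_K.
have -> : inner (Kop a g) g = inner (Hop src tgt tau Q th g) g.
  by rewrite /inner; apply: eq_bigr => v _; rewrite hK.
apply => mu hmu; apply: Hs.2; exact: eig_ext hmu.
Qed.

Lemma rayleigh_D (th : 'rV[R]_d) (l : R) (Hs : is_smallest_eigenvalue (Delta src tgt tau th) l) (g : V -> C) :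
  l%:C * inner g g <= inner (Delta src tgt tau th g) g.
Proof.
pose a v w := (v == w)%:R - Kmat th v w.
have ha : forall v w, a w v = conjc (a v w).
  by move=> v w; rewrite /a cjB conjc_nat -Kmat_herm eq_sym.
have := @rayleigh a ha l _ g.
have hK : forall f v, Kop a f v = Delta src tgt tau th f v by move=> f v; rewrite Delta_K.
have -> : inner (Kop a g) g = inner (Delta src tgt tau th g) g.
  by rewrite /inner; apply: eq_bigr => v _; rewrite hK.
apply => mu hmu; apply: Hs.2; exact: eig_ext hmu.
Qed.

Lemma sqdeg_neq0 (n : nat) : (0 < n)%N -> (Num.sqrt (n%:R : R))%:C != 0 :> C.
Proof.
move=> hn; have hs : 0 < Num.sqrt (n%:R : R) by rewrite sqrtr_gt0 ltr0n.
apply/eqP => h; have h0 : Num.sqrt (n%:R : R) = 0 by case: h.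
by move: hs; rewrite h0 ltxx.
Qed.

Lemma sqdeg_eig (Hd : forall v, (0 < deg src v)%N) (v : V) :
  Hop src tgt tau (fun _ => 0 : R) (0 : 'rV[R]_d) (fun v => (sqdeg R src v)%:C) v
  = (0 : R)%:C * (sqdeg R src v)%:C.
Proof.
rewrite /Hop /Delta rC0 !mul0r addr0.
have ht : forall e, src e == v ->
   expi (pairing tau e 0) / (Num.sqrt ((deg src v)%:R * (deg src (tgt e))%:R))%:C
     * (sqdeg R src (tgt e))%:C = ((sqdeg R src v)^-1)%:C.
  move=> e /eqP he; rewrite pairing0 expi0 /sqdeg sqrtrM ?ler0n // rC_mul rC_inv.
  have h1 := sqdeg_neq0 (Hd v); have h2 := sqdeg_neq0 (Hd (tgt e)).
  by field; rewrite h1 h2.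
rewrite (eq_bigr _ ht).
rewrite (eq_bigl (fun e => e \in [set e | src e == v])); last by move=> e; rewrite inE.
rewrite sumr_const -/(deg src v).
have h1 := sqdeg_neq0 (Hd v).
have hd : ((deg src v)%:R : C) = (sqdeg R src v)%:C * (sqdeg R src v)%:C.
  by rewrite -rC_mul -expr2 /sqdeg sqr_sqrtr ?ler0n // rmorph_nat.
rewrite -mulr_natr hd rC_inv /sqdeg; apply/eqP; rewrite subr_eq0; apply/eqP.
by field.
Qed.

End P.

Unset Implicit Arguments.

Lemma sq_le (R : realType) (a b : R) : 0 <= a -> a <= b -> a ^+ 2 <= b ^+ 2.
Proof. by move=> ha hab; rewrite !expr2; apply: ler_pM. Qed.

Theorem lemma4p2 (R : realType) (d : nat) (V E : finType)
  (src tgt : E -> V) (rev : E -> E) (tau : E -> 'rV[int]_d)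
  (Q : V -> R) (psi : V -> R) (lam10 : R) :
  (0 < d)%N ->
  quotient_graph_axioms src tgt rev tau ->
  gamma_connected src tgt tau ->
  (forall v, 0 < psi v) ->
  is_eigenvector (Hop src tgt tau Q 0) lam10%:C (fun v => (psi v)%:C) ->
  is_smallest_eigenvalue (Hop src tgt tau Q 0) lam10 ->
  (forall (f : V -> R[i]) (theta : 'rV[R]_d),
     inner (fun v => Hop src tgt tau Q theta (mulop psi f) v
                       - lam10%:C * mulop psi f v)
           (mulop psi f)
     = 2^-1 * \sum_(e : E) (cw src tgt psi e)%:C *
              `| f (src e) - expi (pairing tau e theta) * f (tgt e) | ^+ 2) /\
  (forall (theta : 'rV[R]_d) (lam1 lam01 : R),
     is_smallest_eigenvalue (Hop src tgt tau Q theta) lam1 ->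
     is_smallest_eigenvalue (Delta src tgt tau theta) lam01 ->
     let c0 := psi_plus src psi / psi_minus src psi in
     c0 ^- 2 * lam01 <= lam1 - lam10 <= c0 ^+ 2 * lam01).
Proof.
move=> d0 Hq Hc hpsi [[v0 _] Heig] _.
split; first by move=> f th; have H := part_i Hq Heig f th; exact H.
move=> th lam1 lam01 HsH HsD; cbv zeta.
have Hd := deg_pos d0 Hc.
pose sq v := sqdeg R src v.
have sqpos v : 0 < sq v by rewrite sqrtr_gt0 ltr0n Hd.
pose r v := psi v / sq v.
have rpos v : 0 < r v by rewrite divr_gt0.
pose vmin := [arg min_(v < v0) r v]%O.
have hmin v : r vmin <= r v by rewrite /vmin; case: arg_minP => // i _ h; exact: h.
pose vmax := [arg max_(v > v0) r v]%O.
have hmax v : r v <= r vmax by rewrite /vmax; case: arg_maxP => // i _ h; exact: h.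
have hpm : r vmin <= psi_minus src psi.
  apply: lb_le_inf; first by exists (r v0), v0.
  by move=> y [v _ <-]; exact: hmin v.
have hpmv v : psi_minus src psi <= r v.
  apply: ge_inf; last by exists v.
  by exists (r vmin) => y [w _ <-]; exact: hmin w.
have hppv v : r v <= psi_plus src psi.
  apply: ub_le_sup; last by exists v.
  by exists (r vmax) => y [w _ <-]; exact: hmax w.
set pm := psi_minus src psi; set pp := psi_plus src psi.
have pm_gt0 : 0 < pm := lt_le_trans (rpos vmin) hpm.
have pm_le_pp : pm <= pp := le_trans (hpmv v0) (hppv v0).
have pp_gt0 : 0 < pp := lt_le_trans pm_gt0 pm_le_pp.
have hcw e : cw src tgt psi e = r (tgt e) * r (src e).
  by rewrite /cw /r /sq /sqdeg sqrtrM ?ler0n // invfM; ring.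
have hcwb e : pm ^+ 2 <= cw src tgt psi e <= pp ^+ 2.
  rewrite hcw !expr2; apply/andP; split; apply: ler_pM => //; exact: ltW.
pose X e := expi (pairing tau e th).
pose Nf (f : V -> R[i]) := \sum_e `|f (src e) - X e * f (tgt e)| ^+ 2.
pose Wf (f : V -> R[i]) :=
  \sum_e (cw src tgt psi e)%:C * `|f (src e) - X e * f (tgt e)| ^+ 2.
have hW f : (pm ^+ 2)%:C * Nf f <= Wf f /\ Wf f <= (pp ^+ 2)%:C * Nf f.
  split; rewrite /Nf /Wf mulr_sumr; apply: ler_sum => e _;
    (apply: ler_wpM2r; first exact: exprn_ge0);
    rewrite lecR; by case/andP: (hcwb e).
have F3 f : inner (Hop src tgt tau Q th (mulop psi f)) (mulop psi f)
    - lam10%:C * inner (mulop psi f) (mulop psi f) = 2^-1 * Wf f.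
  by rewrite -inner_sub; have H := part_i Hq Heig f th; exact H.
have hcw1 e : cw src tgt (sqdeg R src) e = 1.
  rewrite /cw /sqdeg -sqrtrM ?ler0n // mulfV //.
  by rewrite gt_eqF // sqrtr_gt0 mulr_gt0 // ltr0n Hd.
have F4 f : inner (Delta src tgt tau th (mulop (sqdeg R src) f)) (mulop (sqdeg R src) f)
    = 2^-1 * Nf f.
  have := part_i Hq (sqdeg_eig R tgt tau Hd) f th.
  rewrite inner_sub rC0 mul0r subr0 => h1.
  transitivity (inner (Hop src tgt tau (fun _ => 0) th (mulop (sqdeg R src) f))
                  (mulop (sqdeg R src) f)).
    by rewrite /inner; apply: eq_bigr => v _; rewrite /Hop rC0 mul0r addr0.
  rewrite h1 /Nf; congr (_ * _); apply: eq_bigr => e _.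
  by rewrite hcw1 rC1 mul1r.
have nE (phi : V -> R) f : inner (mulop phi f) (mulop phi f)
    = \sum_v (phi v ^+ 2)%:C * (f v * conjc (f v)).
  rewrite /inner; apply: eq_bigr => v _.
  by rewrite /mulop cjE cjM conjc_real expr2 rC_mul; ring.
have psiE v : psi v = r v * sq v by rewrite /r divfK // gt_eqF.
have nb f : (pm ^+ 2)%:C * inner (mulop (sqdeg R src) f) (mulop (sqdeg R src) f)
      <= inner (mulop psi f) (mulop psi f) /\
    inner (mulop psi f) (mulop psi f)
      <= (pp ^+ 2)%:C * inner (mulop (sqdeg R src) f) (mulop (sqdeg R src) f).
  rewrite !nE !mulr_sumr; split; apply: ler_sum => v _.
    rewrite [X in X <= _]mulrA; apply: ler_wpM2r; first exact: mulcJ_ge0.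
    rewrite -rC_mul lecR psiE exprMn; apply: ler_wpM2r; first exact: exprn_ge0 (ltW (sqpos v)).
    exact: sq_le (ltW pm_gt0) (hpmv v).
  rewrite [X in _ <= X]mulrA; apply: ler_wpM2r; first exact: mulcJ_ge0.
  rewrite -rC_mul lecR psiE exprMn; apply: ler_wpM2r; first exact: exprn_ge0 (ltW (sqpos v)).
  exact: sq_le (ltW (rpos v)) (hppv v).
have [[h [[vh hvh] hDh]] _] := HsD.
have [[g [[vg hvg] hHg]] _] := HsH.
have sqC0 v : (sqdeg R src v)%:C != 0 :> R[i] by exact: sqdeg_neq0 (Hd v).
have psiC0 v : (psi v)%:C != 0 :> R[i].
  apply/eqP => h0; have : psi v = 0 by case: h0.
  by move/eqP; rewrite gt_eqF.
pose fh v := h v / (sqdeg R src v)%:C.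
have hfh : mulop (sqdeg R src) fh = h.
  by apply/funext => v; rewrite /mulop /fh mulrC divfK.
pose fg v := g v / (psi v)%:C.
have hfg : mulop psi fg = g.
  by apply/funext => v; rewrite /mulop /fg mulrC divfK.
have Ih_gt0 : 0 < inner h h := inner_gt0 hvh.
have Ig_gt0 : 0 < inner g g := inner_gt0 hvg.
have hDh' : inner (Delta src tgt tau th h) h = lam01%:C * inner h h := inner_eig hDh.
have hHg' : inner (Hop src tgt tau Q th g) g = lam1%:C * inner g g := inner_eig hHg.
have Nf_ge0 f : 0 <= Nf f by apply: sumr_ge0 => e _; exact: exprn_ge0.
have e4 : 2^-1 * Nf fh = lam01%:C * inner h h by rewrite -F4 hfh.
have lam01_ge0 : 0 <= lam01.
  have : 0 <= lam01%:C * inner h h.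
    by rewrite -e4 mulr_ge0 // invr_ge0 ler0n.
  by rewrite pmulr_lge0 // ler0c.
have M2_gt0 : 0 < (pm ^+ 2)%:C :> R[i] by rewrite ltcR exprn_gt0.
have P2_gt0 : 0 < (pp ^+ 2)%:C :> R[i] by rewrite ltcR exprn_gt0.
have L01_ge0 : 0 <= lam01%:C :> R[i] by rewrite ler0c.
apply/andP; split.
-
  have hc0 : (pp / pm) ^- 2 = pm ^+ 2 / pp ^+ 2 by rewrite expr_div_n invf_div.
  rewrite hc0 -lecR rC_sub rC_mul rC_div -(ler_pM2r Ig_gt0).
  pose hk := mulop (sqdeg R src) fg.
  have hIg : inner g g <= (pp ^+ 2)%:C * inner hk hk by rewrite -hfg; exact: (nb fg).2.
  apply: (le_trans (y := (pm ^+ 2)%:C * (lam01%:C * inner hk hk))).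
    have -> : (pm ^+ 2)%:C / (pp ^+ 2)%:C * lam01%:C * inner g g
        = (pm ^+ 2)%:C * (lam01%:C * (((pp ^+ 2)%:C)^-1 * inner g g)) by ring.
    apply: ler_wpM2l; first exact: ltW.
    apply: ler_wpM2l => //.
    by rewrite ler_pdivrMl.
  apply: (le_trans (y := (pm ^+ 2)%:C * inner (Delta src tgt tau th hk) hk)).
    apply: ler_wpM2l; first exact: ltW.
    exact (rayleigh_D Hq HsD hk).
  have F4g := F4 fg; rewrite -/hk in F4g; rewrite F4g.
  apply: (le_trans (y := 2^-1 * Wf fg)).
    rewrite mulrCA; apply: ler_wpM2l; first by rewrite invr_ge0 ler0n.
    exact: (hW fg).1.
  rewrite -F3 hfg hHg' mulrBl.
  by [].
-
  have hc0 : (pp / pm) ^+ 2 = pp ^+ 2 / pm ^+ 2 by rewrite expr_div_n.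
  pose Psi := mulop psi fh.
  have IP_gt0 : 0 < inner Psi Psi.
    apply: (inner_gt0 (v := vh)); rewrite /Psi /mulop /fh.
    by rewrite mulf_neq0 // mulf_neq0 // invr_eq0.
  rewrite hc0 -lecR rC_sub rC_mul rC_div -(ler_pM2r IP_gt0).
  apply: (le_trans (y := 2^-1 * Wf fh)).
    rewrite -F3 mulrBl lerD2r; exact (rayleigh_H Hq HsH Psi).
  apply: (le_trans (y := (pp ^+ 2)%:C * (2^-1 * Nf fh))).
    rewrite mulrCA; apply: ler_wpM2l; first by rewrite invr_ge0 ler0n.
    exact: (hW fh).2.
  rewrite e4.
  have hIh : (pm ^+ 2)%:C * inner h h <= inner Psi Psi by rewrite -{1 2}hfh; exact: (nb fh).1.
  have -> : (pp ^+ 2)%:C / (pm ^+ 2)%:C * lam01%:C * inner Psi Psi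
      = (pp ^+ 2)%:C * (lam01%:C * (((pm ^+ 2)%:C)^-1 * inner Psi Psi)) by ring.
  apply: ler_wpM2l; first exact: ltW.
  apply: ler_wpM2l => //.
  by rewrite ler_pdivlMl.
Qed.
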